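(* Let $\mathbb{H}^n$ be $\mathbb{R}^n$ or $\mathbb{C}^n$, and let $m\ge \frac{n(n+1)}{2}$ in the real case and $m\ge n^2$ in the complex case. The set of all $m$-element Parseval frames for $\mathbb{H}^n$ which are injective is dense, with respect to the distance $d$, in the set of all $m$-element Parseval frames for $\mathbb{H}^n$.
   Context: A frame $\{x_k\}_{k=1}^m$ for $\mathbb{H}^n$ is Parseval if $\sum_{k=1}^m|\langle x,x_k\rangle|^2=\|x\|^2$ for all $x$. A family $\{x_k\}$ is called injective if whenever a self-adjoint operator $T$ satisfies $\langle Tx_k,x_k\rangle=0$ for all $k$, then $T=0$. For $m$-element frames, $d(\{x_k\},\{y_k\})^2=\sum_{k=1}^m\|x_k-y_k\|^2$. *)

(* Defs.v *)
From HB Require Import structures.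
From mathcomp Require Import all_boot all_order all_algebra.
From mathcomp Require Import reals.
From mathcomp Require Export complex.
Set Implicit Arguments. Unset Strict Implicit. Unset Printing Implicit Defensive.
Import Order.TTheory GRing.Theory Num.Theory.
Local Open Scope ring_scope.

(* H^n is modelled by column vectors 'cV[K]_n over K = R (conj = id) or
   K = R[i] (conj = complex conjugation).  All notions are parametrised by
   the conjugation [conj] of the scalar field. *)
Section Frames.
Variables (K : numFieldType) (conj : K -> K).

Definition inner (n : nat) (x y : 'cV[K]_n) : K :=
  \sum_(i < n) x i 0 * conj (y i 0).

Definition sqnorm (n : nat) (x : 'cV[K]_n) : K := \sum_(i < n) `|x i 0| ^+ 2.

Definition parseval (n m : nat) (X : 'I_m -> 'cV[K]_n) : Prop :=
  forall x : 'cV[K]_n, \sum_(k < m) `|inner x (X k)| ^+ 2 = sqnorm x.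

Definition adjoint (n : nat) (T : 'M[K]_n) : 'M[K]_n := map_mx conj T^T.

Definition selfadjoint (n : nat) (T : 'M[K]_n) : Prop := adjoint T = T.

Definition injective_family (n m : nat) (X : 'I_m -> 'cV[K]_n) : Prop :=
  forall T : 'M[K]_n, selfadjoint T ->
    (forall k, inner (T *m X k) (X k) = 0) -> T = 0.

Definition frame_dist2 (n m : nat) (X Y : 'I_m -> 'cV[K]_n) : K :=
  \sum_(k < m) sqnorm (X k - Y k).

Definition injective_parseval_dense (n m : nat) : Prop :=
  forall X : 'I_m -> 'cV[K]_n, parseval X ->
  forall eps : K, 0 < eps ->
  exists Y : 'I_m -> 'cV[K]_n,
    [/\ parseval Y, injective_family Y & frame_dist2 X Y < eps ^+ 2].
End Frames.

(* Main.v *)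
Require Import Defs.
From HB Require Import structures.
From mathcomp Require Import all_boot all_order all_algebra.
From mathcomp Require Import reals complex.
Import Order.TTheory GRing.Theory Num.Theory.
Local Open Scope ring_scope.

From mathcomp Require Import ring lra.
From Stdlib Require Import FunctionalExtensionality.
Set Implicit Arguments. Unset Strict Implicit. Unset Printing Implicit Defensive.


Section Small.
Variable K : numFieldType.

Definition ev (P : nat -> Prop) := exists N, forall s, (N <= s)%N -> P s.
Definition small (f : nat -> K) := forall e : K, 0 < e -> ev (fun s => `|f s| < e).
Definition bnd (f : nat -> K) := exists M : K, ev (fun s => `|f s| <= M).

Lemma evI (P Q : nat -> Prop) : ev P -> ev Q -> ev (fun s => P s /\ Q s).
Proof.
move=> [N1 H1] [N2 H2]; exists (maxn N1 N2) => s hs; split.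
  by apply: H1; rewrite (leq_trans (leq_maxl _ _) hs).
by apply: H2; rewrite (leq_trans (leq_maxr _ _) hs).
Qed.

Lemma evW (P Q : nat -> Prop) : ev P -> (forall s, P s -> Q s) -> ev Q.
Proof. by move=> [N H] PQ; exists N => s /H /PQ. Qed.

Lemma ev_seq (I : eqType) (r : seq I) (P : I -> nat -> Prop) :
  (forall i, ev (P i)) -> ev (fun s => forall i, i \in r -> P i s).
Proof.
move=> H; elim: r => [|a r IH]; first by exists 0%N => s _ i.
apply: (evW (evI (H a) IH)) => s [Pa Pr] i; rewrite inE => /orP[/eqP->//|].
exact: Pr.
Qed.

Lemma ev_fin (I : finType) (P : I -> nat -> Prop) :
  (forall i, ev (P i)) -> ev (fun s => forall i, P i s).
Proof.
move=> H; apply: (evW (ev_seq (enum I) H)) => s Hs i; apply: Hs.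
by rewrite mem_enum.
Qed.

Lemma small0 : small (fun _ => 0).
Proof. by move=> e e0; exists 0%N => s _; rewrite normr0. Qed.

Lemma smallD f g : small f -> small g -> small (fun s => f s + g s).
Proof.
move=> hf hg e e0; have e2 : 0 < e / 2 by rewrite divr_gt0 // ltr0n.
apply: (evW (evI (hf _ e2) (hg _ e2))) => s [h1 h2].
rewrite (le_lt_trans (ler_normD _ _)) // [e]splitr ltrD //.
Qed.

Lemma smallN f : small f -> small (fun s => - f s).
Proof. by move=> hf e e0; apply: (evW (hf _ e0)) => s; rewrite normrN. Qed.

Lemma smallB f g : small f -> small g -> small (fun s => f s - g s).
Proof. by move=> hf hg; apply: smallD => //; apply: smallN. Qed.

Lemma small_ext f g : small f -> (forall s, f s = g s) -> small g.
Proof. by move=> hf fg e e0; apply: (evW (hf _ e0)) => s; rewrite fg. Qed.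

Lemma small_seq (I : Type) (r : seq I) (P : pred I) (F : I -> nat -> K) :
  (forall i, small (F i)) -> small (fun s => \sum_(i <- r | P i) F i s).
Proof.
move=> H; elim: r => [|a r IH].
  by apply: (small_ext small0) => s; rewrite big_nil.
case Pa: (P a).
  by apply: (small_ext (smallD (H a) IH)) => s; rewrite big_cons Pa.
by apply: (small_ext IH) => s; rewrite big_cons Pa.
Qed.

Lemma small_bnd f : small f -> bnd f.
Proof. by move=> hf; exists 1; apply: (evW (hf _ ltr01)) => s /ltW. Qed.

Lemma bndC c : bnd (fun _ => c).
Proof. by exists `|c|; exists 0%N. Qed.

Lemma bnd_pos f : bnd f -> exists2 M, 0 < M & ev (fun s => `|f s| <= M).
Proof.
move=> [M H]; exists (`|M| + 1); first by rewrite ltr_wpDl.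
apply: (evW H) => s hs; have M0 : 0 <= M by rewrite (le_trans _ hs).
by rewrite (le_trans hs) // ger0_norm // lerDl.
Qed.

Lemma smallMb f g : small f -> bnd g -> small (fun s => f s * g s).
Proof.
move=> hf /bnd_pos [M M0 hM] e e0.
have eM : 0 < e / M by rewrite divr_gt0.
apply: (evW (evI (hf _ eM) hM)) => s [h1 h2].
rewrite normrM (le_lt_trans (ler_wpM2l (normr_ge0 _) h2)) //.
by rewrite -ltr_pdivlMr.
Qed.

Lemma smallbM f g : bnd f -> small g -> small (fun s => f s * g s).
Proof.
by move=> hf hg; apply: (small_ext (smallMb hg hf)) => s; rewrite mulrC.
Qed.

Lemma bnd_small f c : small (fun s => f s - c) -> bnd f.
Proof.
move=> hf; have [M hM] := small_bnd hf; exists (M + `|c|).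
apply: (evW hM) => s hs; rewrite -[f s](subrK c) (le_trans (ler_normD _ _)) //.
by rewrite lerD2r.
Qed.

Lemma small_inv r : small (fun s => r s - 1) -> small (fun s => (r s)^-1 - 1).
Proof.
move=> hr e e0.
have h2 : 0 < 2^-1 :> K by rewrite invr_gt0 ltr0n.
have e2 : 0 < e / 2 by rewrite divr_gt0 // ltr0n.
apply: (evW (evI (hr _ h2) (hr _ e2))) => s [h1 h3].
have rge : 2^-1 <= `|r s|.
  have H1 : 1 <= `|r s| + `|1 - r s|.
    by rewrite addrC -{1}normr1 -{1}(subrK (r s) 1) ler_normD.
  have h1' : `|1 - r s| <= 2^-1 by rewrite distrC ltW.
  have H2 : 1 <= `|r s| + 2^-1 by rewrite (le_trans H1) // lerD2l.
  have e1 : 2^-1 + 2^-1 = 1 :> K by rewrite [RHS](splitr 1) mul1r.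
  by rewrite -(lerD2r 2^-1) e1.
have r0 : 0 < `|r s| by rewrite (lt_le_trans h2).
have rn0 : r s != 0 by rewrite -normr_gt0.
have -> : (r s)^-1 - 1 = (1 - r s) / r s.
  by rewrite mulrBl mul1r divff.
rewrite normrM normrV ?unitfE // ltr_pdivrMr // distrC.
by rewrite (lt_le_trans h3) // ler_wpM2l // ltW.
Qed.

End Small.


Section Gen.
Variables (K : numFieldType) (conj : {rmorphism K -> K}).
Hypotheses (conjK : involutive conj) (mulJ : forall x, x * conj x = `|x| ^+ 2)
  (normJ : forall x, `|conj x| = `|x|).

Definition mxH p q (A : 'M[K]_(p, q)) : 'M_(q, p) := map_mx conj A^T.

Lemma mxH_mul p q r (A : 'M[K]_(p, q)) (B : 'M_(q, r)) :
  mxH (A *m B) = mxH B *m mxH A.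
Proof. by rewrite /mxH trmx_mul map_mxM. Qed.

Lemma mxHK p q (A : 'M[K]_(p, q)) : mxH (mxH A) = A.
Proof. by apply/matrixP => i j; rewrite !mxE conjK. Qed.

Lemma mxHE p q (A : 'M[K]_(p, q)) i j : mxH A i j = conj (A j i).
Proof. by rewrite !mxE. Qed.

Lemma adjointE n (T : 'M[K]_n) : adjoint conj T = mxH T.
Proof. by []. Qed.

Lemma innerE n (x y : 'cV[K]_n) : inner conj x y = (mxH y *m x) 0 0.
Proof. by rewrite /inner mxE; apply: eq_bigr => i _; rewrite !mxE mulrC. Qed.

Lemma inner_mul n (B : 'M[K]_n) (x y : 'cV[K]_n) :
  inner conj x (B *m y) = inner conj (mxH B *m x) y.
Proof. by rewrite !innerE mxH_mul mulmxA. Qed.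

Lemma dot_ge0 p (w : 'rV[K]_p) : (w *m mxH w) 0 0 = \sum_i `|w 0 i| ^+ 2.
Proof. by rewrite mxE; apply: eq_bigr => i _; rewrite !mxE mulJ. Qed.

Lemma dot_eq0 p (w : 'rV[K]_p) : (w *m mxH w) 0 0 = 0 -> w = 0.
Proof.
rewrite dot_ge0 => h; apply/rowP => i; rewrite mxE.
have := @psumr_eq0P _ _ predT (fun i => `|w 0 i| ^+ 2) (fun i _ => exprn_ge0 2 (normr_ge0 _)) h i isT.
by move/eqP; rewrite sqrf_eq0 normr_eq0 => /eqP.
Qed.

Definition mat n m (X : 'I_m -> 'cV[K]_n) : 'M[K]_(n, m) := \matrix_(i, k) X k i 0.

Lemma col_mat n m (X : 'I_m -> 'cV[K]_n) k : col k (mat X) = X k.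
Proof. by apply/colP => i; rewrite !mxE. Qed.

Lemma sqnormE n (x : 'cV[K]_n) : sqnorm x = (mxH x *m x) 0 0.
Proof.
by rewrite /sqnorm mxE; apply: eq_bigr => i _; rewrite !mxE mulrC mulJ.
Qed.

Lemma parseval_sum n m (F : 'M[K]_(n, m)) (x : 'cV[K]_n) :
  \sum_k `|inner conj x (col k F)| ^+ 2 =
  (mxH x *m (F *m mxH F) *m x) 0 0.
Proof.
set w := mxH x *m F.
have -> : mxH x *m (F *m mxH F) *m x = w *m mxH w.
  by rewrite /w mxH_mul mxHK !mulmxA.
rewrite dot_ge0; apply: eq_bigr => k _; rewrite innerE.
rewrite -normJ; congr (`|_| ^+ 2).
rewrite !mxE rmorph_sum; apply: eq_bigr => i _; rewrite !mxE rmorphM conjK.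
by rewrite mulrC.
Qed.

Lemma parseval_of n m (F : 'M[K]_(n, m)) :
  F *m mxH F = 1%:M -> parseval conj (fun k => col k F).
Proof.
by move=> H x; rewrite parseval_sum H mulmx1 sqnormE.
Qed.


Lemma mxHD p q (A B : 'M[K]_(p, q)) : mxH (A + B) = mxH A + mxH B.
Proof. by apply/matrixP => i j; rewrite !mxE rmorphD. Qed.

Lemma mxHZ p q c (A : 'M[K]_(p, q)) : mxH (c *: A) = conj c *: mxH A.
Proof. by apply/matrixP => i j; rewrite !mxE rmorphM. Qed.

Lemma mxH1 n : mxH (1%:M : 'M[K]_n) = 1%:M.
Proof. by apply/matrixP => i j; rewrite !mxE eq_sym rmorph_nat. Qed.

Lemma mxH_delta n (i : 'I_n) : mxH (delta_mx i 0 : 'cV[K]_n) = delta_mx 0 i.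
Proof. by apply/matrixP => a b; rewrite !mxE rmorph_nat andbC. Qed.

Lemma delta_quad n (D : 'M[K]_n) (i j : 'I_n) :
  ((delta_mx 0 i : 'rV[K]_n) *m D *m (delta_mx j 0 : 'cV[K]_n)) 0 0 = D i j.
Proof. by rewrite -rowE -colE !mxE. Qed.

Hypothesis polar : exists w, forall a, a + conj a = 0 ->
  w * a + conj (w * a) = 0 -> a = 0.

Lemma polarization n (D : 'M[K]_n) : mxH D = D ->
  (forall x : 'cV_n, (mxH x *m D *m x) 0 0 = 0) -> D = 0.
Proof.
move=> HD HQ; have [w Hw] := polar.
have Dii i : D i i = 0.
  have := HQ (delta_mx i 0). rewrite mxH_delta. rewrite delta_quad. done.
have Dji i j : D j i = conj (D i j) by rewrite -{1}HD mxE mxE.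
have key i j c : c * D i j + conj (c * D i j) = 0.
  have := HQ (delta_mx i 0 + c *: delta_mx j 0).
  rewrite mxHD mxHZ !mxH_delta !mulmxDl !mulmxDr -!scalemxAl -!scalemxAr.
  rewrite !(delta_quad, mxE) !Dii (Dji i j) rmorphM.
  by rewrite !mulr0 !add0r addr0 => <-; rewrite mulrC [conj c * _]mulrC.
apply/matrixP => i j; rewrite mxE; apply: Hw; last exact: key.
by have := key i j 1; rewrite mul1r.
Qed.

Lemma parseval_mx n m (X : 'I_m -> 'cV[K]_n) :
  parseval conj X -> mat X *m mxH (mat X) = 1%:M.
Proof.
move=> HX; apply/eqP; rewrite -subr_eq0; apply/eqP.
apply: polarization.
  by rewrite mxHD mxH_mul mxHK -scaleN1r mxHZ mxH1 rmorphN1 scaleN1r.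
move=> x; have := HX x; rewrite -{1}(@eq_bigr _ _ _ _ _ _ (fun k => `|inner conj x (col k (mat X))| ^+ 2)); last first.
  by move=> k _; rewrite col_mat.
rewrite parseval_sum sqnormE => h.
by rewrite mulmxBr mulmxBl mxE h mulmx1 [X in _ + X]mxE subrr.
Qed.


Lemma mxH_unit n (B : 'M[K]_n) : (mxH B \in unitmx) = (B \in unitmx).
Proof. by rewrite /mxH map_unitmx unitmx_tr. Qed.

Lemma inj_mul n m (X : 'I_m -> 'cV[K]_n) (B : 'M[K]_n) :
  injective_family conj X -> B \in unitmx ->
  injective_family conj (fun k => B *m X k).
Proof.
move=> HX uB T sT H0.
have uBH : mxH B \in unitmx by rewrite mxH_unit.
have HT : mxH B *m T *m B = 0.
  apply: HX.
    have sT' : mxH T = T := sT.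
    by rewrite /selfadjoint adjointE !mxH_mul mxHK sT' mulmxA.
  by move=> k; rewrite -!mulmxA -inner_mul; apply: H0.
by rewrite -(mulKmx uBH T) -(mulmxK uB (mxH B *m T)) HT mul0mx mulmx0.
Qed.

Section Lmap.
Variables (n m : nat) (b : K).
Hypothesis hb : forall T : 'M[K]_n, selfadjoint conj T ->
  b *: (mxvec T - mxvec T^T) = 0.

Definition Lv (F : 'I_m -> 'cV[K]_n) (v : 'rV[K]_(n * n)) : 'rV[K]_(m + n * n) :=
  row_mx (\row_k inner conj (vec_mx v *m F k) (F k))
         (b *: (v - mxvec (vec_mx v)^T)).

Lemma Lv_lin F a u w : Lv F (a *: u + w) = a *: Lv F u + Lv F w.
Proof.
rewrite /Lv scale_row_mx add_row_mx; congr row_mx.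
  apply/rowP => k; rewrite !mxE !innerE linearP /=.
  by rewrite mulmxDl -scalemxAl mulmxDr -scalemxAr !mxE.
rewrite !linearP /=.
by rewrite scalerN addrACA -scalerBr scalerDr scalerA mulrC -scalerA.
Qed.

Lemma Lv0 F : Lv F 0 = 0.
Proof.
have := Lv_lin F 1 0 0; rewrite scale1r addr0 -{1}[Lv F 0]addr0.
by move=> h; apply/esym; apply: (addrI (Lv F 0)); rewrite h scale1r.
Qed.

Lemma Lv_sum F (I : Type) (r : seq I) (f : I -> K) (g : I -> 'rV_(n * n)) :
  Lv F (\sum_(i <- r) f i *: g i) = \sum_(i <- r) f i *: Lv F (g i).
Proof.
elim: r => [|x r IH]; first by rewrite !big_nil Lv0.
by rewrite !big_cons Lv_lin IH.
Qed.

Definition LM F : 'M[K]_(n * n, m + n * n) :=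
  \matrix_(a, c) Lv F (delta_mx 0 a) 0 c.

Lemma LME F v : v *m LM F = Lv F v.
Proof.
rewrite {2}(row_sum_delta v) Lv_sum; apply/rowP => c.
rewrite !mxE summxE; apply: eq_bigr => a _; rewrite !mxE.
done.
Qed.

Definition Gram F := LM F *m mxH (LM F).

Lemma gram_inj F : Gram F \in unitmx -> injective_family conj F.
Proof.
move=> uG T sT H0.
have L0 : Lv F (mxvec T) = 0.
  rewrite /Lv mxvecK hb // -row_mx0; congr row_mx.
  by apply/rowP => k; rewrite !mxE H0.
have : mxvec T *m Gram F == 0 by rewrite /Gram mulmxA LME L0 mul0mx.
rewrite mulmx_free_eq0 ?row_free_unit // => /eqP HT.
by rewrite -[T]mxvecK HT linear0.
Qed.

Lemma gram_unit F : (forall v, Lv F v = 0 -> v = 0) -> Gram F \in unitmx.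
Proof.
move=> HL; rewrite -row_free_unit; apply: inj_row_free => v Hv.
apply: HL; apply: dot_eq0.
by rewrite -LME mxH_mul mulmxA -(mulmxA v) -/(Gram F) Hv mul0mx mxE.
Qed.

End Lmap.


Section PF.

Definition pf (f : nat -> K) := exists p : {poly K}, forall s, f s = p.[s%:R].

Lemma pf_ext f g : pf f -> (forall s, f s = g s) -> pf g.
Proof. by move=> [p hp] fg; exists p => s; rewrite -fg. Qed.

Lemma pfC c : pf (fun _ => c).
Proof. by exists c%:P => s; rewrite hornerC. Qed.

Lemma pfD f g : pf f -> pf g -> pf (fun s => f s + g s).
Proof. by move=> [p hp] [q hq]; exists (p + q) => s; rewrite hornerD hp hq. Qed.

Lemma pfM f g : pf f -> pf g -> pf (fun s => f s * g s).
Proof. by move=> [p hp] [q hq]; exists (p * q) => s; rewrite hornerM hp hq. Qed.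

Lemma pfN f : pf f -> pf (fun s => - f s).
Proof. by move=> [p hp]; exists (- p) => s; rewrite hornerN hp. Qed.

Lemma pf_lin a c : pf (fun s => s%:R * a + c).
Proof.
by exists (a%:P * 'X + c%:P) => s; rewrite hornerD hornerMX !hornerC mulrC.
Qed.

Lemma pf_conj f : pf f -> pf (fun s => conj (f s)).
Proof.
move=> [p hp]; exists (map_poly conj p) => s.
by rewrite hp -horner_map rmorph_nat.
Qed.

Lemma pf_sum (I : Type) (r : seq I) (P : pred I) (F : I -> nat -> K) :
  (forall i, pf (F i)) -> pf (fun s => \sum_(i <- r | P i) F i s).
Proof.
move=> H; elim: r => [|a r IH].
  by apply: (pf_ext (pfC 0)) => s; rewrite big_nil.
case Pa: (P a).
  by apply: (pf_ext (pfD (H a) IH)) => s; rewrite big_cons Pa.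
by apply: (pf_ext IH) => s; rewrite big_cons Pa.
Qed.

Lemma pf_prod (I : Type) (r : seq I) (P : pred I) (F : I -> nat -> K) :
  (forall i, pf (F i)) -> pf (fun s => \prod_(i <- r | P i) F i s).
Proof.
move=> H; elim: r => [|a r IH].
  by apply: (pf_ext (pfC 1)) => s; rewrite big_nil.
case Pa: (P a).
  by apply: (pf_ext (pfM (H a) IH)) => s; rewrite big_cons Pa.
by apply: (pf_ext IH) => s; rewrite big_cons Pa.
Qed.

Definition pfm p q (A : nat -> 'M[K]_(p, q)) := forall i j, pf (fun s => A s i j).

Lemma pfm_mul p q r (A : nat -> 'M[K]_(p, q)) (B : nat -> 'M[K]_(q, r)) :
  pfm A -> pfm B -> pfm (fun s => A s *m B s).
Proof.
move=> hA hB i j; apply: (pf_ext (pf_sum _ _ (fun k => pfM (hA i k) (hB k j)))).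
by move=> s; rewrite !mxE.
Qed.

Lemma pfm_H p q (A : nat -> 'M[K]_(p, q)) : pfm A -> pfm (fun s => mxH (A s)).
Proof. by move=> hA i j; apply: (pf_ext (pf_conj (hA j i))) => s; rewrite !mxE. Qed.

Lemma pf_det p (A : nat -> 'M[K]_p) : pfm A -> pf (fun s => \det (A s)).
Proof.
move=> hA; rewrite /determinant.
apply: pf_sum => sg; apply: pfM; first exact: pfC.
by apply: pf_prod => i; apply: hA.
Qed.

Lemma pf_roots (p : {poly K}) : p != 0 ->
  forall N, exists2 s, (N <= s)%N & p.[s%:R] != 0.
Proof.
move=> p0 N.
have [/existsP [i hi]|H] := boolP [exists i : 'I_(size p), p.[(N + i)%:R] != 0].
  by exists (N + i)%N; [rewrite leq_addr|].
exfalso; move: H; rewrite negb_exists => /forallP H.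
have := @max_poly_roots _ p [seq (N + i)%:R | i <- iota 0 (size p)] p0.
rewrite size_map size_iota ltnn => h; suff: false by []; apply: h.
  apply/allP => x /mapP [i hi ->]; move: hi; rewrite mem_iota add0n => hi.
  by have := H (Ordinal hi); rewrite negbK.
rewrite map_inj_uniq ?iota_uniq // => x y /eqP.
by rewrite eqr_nat eqn_add2l => /eqP.
Qed.

End PF.


Lemma quad2 n (D : 'M[K]_n) (i j : 'I_n) c :
  (mxH (delta_mx i 0 + c *: delta_mx j 0 : 'cV[K]_n) *m D *m
     (delta_mx i 0 + c *: delta_mx j 0 : 'cV[K]_n)) 0 0
  = D i i + c * D i j + conj c * D j i + conj c * (c * D j j).
Proof.
rewrite mxHD mxHZ !mxH_delta !mulmxDl !mulmxDr -!scalemxAl -!scalemxAr.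
by rewrite !(delta_quad, mxE) addrA.
Qed.

Lemma quad1 n (D : 'M[K]_n) (i : 'I_n) :
  (mxH (delta_mx i 0 : 'cV[K]_n) *m D *m (delta_mx i 0 : 'cV[K]_n)) 0 0 = D i i.
Proof. by rewrite mxH_delta delta_quad. Qed.

Lemma innerQ n (T : 'M[K]_n) x : inner conj (T *m x) x = (mxH x *m T *m x) 0 0.
Proof. by rewrite innerE mulmxA. Qed.

Lemma embed n m (I : finType) (v : I -> 'cV[K]_n) : (#|I| <= m)%N ->
  exists Z : 'I_m -> 'cV[K]_n, forall p, exists k, Z k = v p.
Proof.
move=> hle.
exists (fun k => if [pick p | widen_ord hle (enum_rank p) == k] is Some p then v p else 0).
move=> p; exists (widen_ord hle (enum_rank p)).
case: pickP => [p' /eqP h | /(_ p)]; last by rewrite eqxx.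
by move/(congr1 val): h => /= /val_inj /enum_rank_inj ->.
Qed.

Lemma Zex_of n m (b : K) (I : finType) (v : I -> 'cV[K]_n) : (#|I| <= m)%N ->
  (forall T : 'M[K]_n, (forall p, inner conj (T *m v p) (v p) = 0) ->
     b *: (mxvec T - mxvec T^T) = 0 -> T = 0) ->
  exists Z : 'I_m -> 'cV[K]_n, forall w, Lv b Z w = 0 -> w = 0.
Proof.
move=> hle HT; have [Z HZ] := embed v hle; exists Z => w.
rewrite /Lv -row_mx0 => /eq_row_mx [h1 h2].
suff : vec_mx w = 0 by move=> h; rewrite -[w]vec_mxK h linear0.
apply: HT; last by rewrite vec_mxK.
move=> p; have [k <-] := HZ p.
by move/rowP: h1 => /(_ k); rewrite !mxE.
Qed.

Section GSsec.
Variable sq : K -> K.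
Hypotheses (sq_ge0 : forall x, 0 <= x -> 0 <= sq x)
  (sqK : forall x, 0 <= x -> sq x ^+ 2 = x)
  (conj_ge0 : forall x, 0 <= x -> conj x = x).

Lemma small_conj f : small f -> small (fun s => conj (f s)).
Proof. by move=> hf e e0; apply: (evW (hf _ e0)) => s; rewrite normJ. Qed.

Lemma small_conjB f c : small (fun s => f s - c) ->
  small (fun s => conj (f s) - conj c).
Proof. by move=> hf; apply: (small_ext (small_conj hf)) => s; rewrite rmorphB. Qed.

Lemma small_sq f : (forall s, 0 <= f s) -> small (fun s => f s - 1) ->
  small (fun s => sq (f s) - 1).
Proof.
move=> f0 hf e e0; apply: (evW (hf _ e0)) => s hs; apply: le_lt_trans hs.
have r0 := sq_ge0 (f0 s); rewrite -{2}(sqK (f0 s)).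
have -> : sq (f s) ^+ 2 - 1 = (sq (f s) - 1) * (sq (f s) + 1).
  by rewrite mulrDr mulr1 mulrBl mul1r addrA subrK expr2.
rewrite normrM ler_peMr // ger0_norm ?addr_ge0 //.
by rewrite lerDr.
Qed.

Lemma mxH_col p q r (A : 'M[K]_(p, r)) (B : 'M[K]_(q, r)) :
  mxH (col_mx A B) = row_mx (mxH A) (mxH B).
Proof. by rewrite /mxH tr_col_mx map_row_mx. Qed.

Variable m : nat.

Lemma small_col n (f : nat -> 'rV[K]_m) (F : nat -> 'M[K]_(n, m)) (x : 'rV[K]_m) (X : 'M[K]_(n, m)) :
  (forall j, small (fun s => f s 0 j - x 0 j)) ->
  (forall i j, small (fun s => F s i j - X i j)) ->
  forall i j, small (fun s => col_mx (f s) (F s) i j - col_mx x X i j).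
Proof.
move=> h1 h2 i j; rewrite -(splitK i); case: (split i) => k /=.
  by rewrite (ord1 k); apply: (small_ext (h1 j)) => s; rewrite !col_mxEu.
by apply: (small_ext (h2 k j)) => s; rewrite !col_mxEd.
Qed.

Lemma GS n : forall (X : 'M[K]_(n, m)) (G : nat -> 'M[K]_(n, m)),
  X *m mxH X = 1%:M ->
  (forall i j, small (fun s => G s i j - X i j)) ->
  exists B : nat -> 'M[K]_n,
    ev (fun s => B s \in unitmx /\ (B s *m G s) *m mxH (B s *m G s) = 1%:M) /\
    (forall i j, small (fun s => (B s *m G s) i j - X i j)).
Proof.
elim: n => [|n IH] X G HX HG.
  exists (fun _ => 1%:M); split; last by move=> [].
  exists 0%N => s _; split; first by rewrite unitmxE det1 unitr1.
  by apply/matrixP => -[].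
pose x1 : 'rV[K]_m := usubmx (X : 'M_(1 + n, m)).
pose X' : 'M[K]_(n, m) := dsubmx (X : 'M_(1 + n, m)).
have XE : X = col_mx x1 X' by rewrite vsubmxK.
pose g := fun s => usubmx (G s : 'M_(1 + n, m)).
pose G' := fun s => dsubmx (G s : 'M_(1 + n, m)).
have GE : forall s, G s = col_mx (g s) (G' s) by move=> s; rewrite vsubmxK.
have [Hx1 Hx1X' HX'x1 HX'] : [/\ x1 *m mxH x1 = 1%:M, x1 *m mxH X' = 0,
    X' *m mxH x1 = 0 & X' *m mxH X' = 1%:M].
  have HX2 : col_mx x1 X' *m mxH (col_mx x1 X') = 1%:M :> 'M[K]_(1 + n) by rewrite -XE.
  by move: HX2; rewrite mxH_col mul_col_row (scalar_mx_block 1 n 1) => /eq_block_mx.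
have hg j : small (fun s => g s 0 j - x1 0 j).
  have H := HG (lshift n (0 : 'I_1)) j; apply: (small_ext H) => s; by rewrite /g /x1 !mxE.
have hG' i j : small (fun s => G' s i j - X' i j).
  have H := HG (rshift 1 i) j; apply: (small_ext H) => s; by rewrite /G' /X' !mxE.
pose r2 s := (g s *m mxH (g s)) 0 0.
have r2_ge0 s : 0 <= r2 s by rewrite /r2 dot_ge0 sumr_ge0 // => j _; rewrite exprn_ge0.
have e1 : (x1 *m mxH x1) 0 0 = 1 by rewrite Hx1 mxE.
have hr2 : small (fun s => r2 s - 1).
  have H := small_seq (index_enum 'I_m) predT (fun j => smallD
    (smallMb (hg j) (bnd_small (small_conjB (hg j))))
    (smallbM (bndC (x1 0 j)) (small_conjB (hg j)))).
  apply: (small_ext H) => s; rewrite /r2 -e1 !mxE -sumrB.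
  by apply: eq_bigr => j _; rewrite !mxE; ring.
pose r s := sq (r2 s).
have hr : small (fun s => r s - 1) := small_sq r2_ge0 hr2.
have hri := small_inv hr.
pose u s := (r s)^-1 *: g s.
have hu j : small (fun s => u s 0 j - x1 0 j).
  have H := smallD (hg j) (smallbM (bnd_small (hg j)) hri).
  by apply: (small_ext H) => s; rewrite /u !mxE; ring.
pose c s := G' s *m mxH (u s).
have hc i : small (fun s => c s i 0).
  have H := small_seq (index_enum 'I_m) predT (fun j => smallD
    (smallMb (hG' i j) (bnd_small (small_conjB (hu j))))
    (smallbM (bndC (X' i j)) (small_conjB (hu j)))).
  have e0 : (X' *m mxH x1) i 0 = 0 by rewrite HX'x1 mxE.
  apply: (small_ext H) => s; rewrite /c [RHS](_ : _ = (G' s *m mxH (u s)) i 0 - (X' *m mxH x1) i 0); last by rewrite e0 subr0.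
  rewrite !mxE -sumrB.
  by apply: eq_bigr => j _; rewrite !mxE; ring.
pose H' s := G' s - c s *m u s.
have hH i j : small (fun s => H' s i j - X' i j).
  have H := smallB (hG' i j) (smallMb (hc i) (bnd_small (hu j))).
  apply: (small_ext H) => s; rewrite /H' !mxE big_ord1 !mxE; ring.
have [B' [evB' hY']] := IH X' H' HX' hH.
pose B s : 'M[K]_(1 + n) :=
  block_mx ((r s)^-1)%:M 0 (- ((r s)^-1 *: (B' s *m c s))) (B' s).
have BG s : B s *m G s = col_mx (u s) (B' s *m H' s) :> 'M[K]_(1 + n, m).
  rewrite GE /B mul_block_col mul_scalar_mx mul0mx addr0; congr col_mx.
  by rewrite /H' /u mulmxBr mulNmx -scalemxAl -!scalemxAr mulmxA addrC.
have mxH0 p q : mxH (0 : 'M[K]_(p, q)) = 0.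
  by apply/matrixP => a b; rewrite !mxE rmorph0.
exists B; split; last first.
  move=> i j; have H := small_col hu hY' i j.
  by apply: (small_ext H) => s; rewrite BG -XE.
apply: (evW (evI evB' (hr _ ltr01))) => s [[uB' HY'] hr1].
have r0 : r s != 0.
  by apply: contraTneq hr1 => ->; rewrite sub0r normrN normr1 ltxx.
have rge : 0 <= r s by rewrite sq_ge0.
have cr : conj ((r s)^-1) = (r s)^-1 by rewrite fmorphV conj_ge0.
have Hu : u s *m mxH (u s) = 1%:M.
  rewrite /u mxHZ -scalemxAl -scalemxAr scalerA cr [_ *m _]mx11_scalar.
  have e2 : (g s *m mxH (g s)) 0 0 = r s ^+ 2 by rewrite sqK.
  rewrite e2 scale_scalar_mx; congr (_%:M); field; exact: r0.
have HY'u : B' s *m H' s *m mxH (u s) = 0.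
  by rewrite -mulmxA /H' mulmxBl -mulmxA Hu mulmx1 subrr mulmx0.
have HuY' : u s *m mxH (B' s *m H' s) = 0.
  by rewrite -{1}(mxHK (u s)) -mxH_mul HY'u mxH0.
split.
  have dB : \det (B s : 'M[K]_(1 + n)) = (r s)^-1 * \det (B' s) by rewrite det_lblock det_scalar1.
  rewrite unitmxE dB unitrM -unitmxE uB' andbT unitfE.
  by rewrite invr_eq0.
have -> : B s *m G s *m mxH (B s *m G s) =
   col_mx (u s) (B' s *m H' s) *m mxH (col_mx (u s) (B' s *m H' s)) :> 'M[K]_(1 + n).
  by rewrite -BG.
by rewrite mxH_col mul_col_row Hu HY'u HuY' HY' -scalar_mx_block.
Qed.




Hypothesis archi : forall x : K, exists N : nat, `|x| < N%:R.

Lemma small_invnat : small (fun s => (s%:R : K)^-1).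
Proof.
move=> e e0; have [N HN] := archi e^-1; exists N => s Ns.
have ei : 0 < e^-1 by rewrite invr_gt0.
have Nlt : e^-1 < s%:R.
  rewrite (lt_le_trans _ (_ : N%:R <= s%:R)) //; last by rewrite ler_nat.
  by rewrite (le_lt_trans (real_ler_norm _) HN) // gtr0_real.
have s0 : 0 < s%:R :> K by rewrite (lt_trans ei).
rewrite normfV ger0_norm ?ltW // -[e]invrK ltf_pV2 //.
Qed.

Lemma small_norm (f : nat -> K) : small f -> small (fun s => `|f s|).
Proof. by move=> hf e e0; apply: (evW (hf _ e0)) => s; rewrite normr_id. Qed.

Lemma col_mulmx p q r (A : 'M[K]_(p, q)) (B : 'M[K]_(q, r)) k :
  col k (A *m B) = A *m col k B.
Proof.
by apply/colP => i; rewrite !mxE; apply: eq_bigr => j _; rewrite !mxE.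
Qed.

Section Main.
Variables (n : nat) (b : K).
Hypothesis hb : forall T : 'M[K]_n, selfadjoint conj T ->
  b *: (mxvec T - mxvec T^T) = 0.
Hypothesis Zex : exists Z : 'I_m -> 'cV[K]_n, forall v, Lv b Z v = 0 -> v = 0.

Theorem dense_gen : injective_parseval_dense conj n m.
Proof.
move=> X HX eps eps0.
have [Z HZ] := Zex.
pose F := mat X; have HF := parseval_mx HX.
pose Zm := mat Z.
pose G s := F + (s%:R)^-1 *: Zm.
have hG i j : small (fun s => G s i j - F i j).
  have H := smallMb small_invnat (bndC (Zm i j)).
  by apply: (small_ext H) => s; rewrite /G !mxE; ring.
have [B [evB hY]] := GS HF hG.
pose Fs s := fun k => s%:R *: X k + Z k.
have pfLM : pfm (fun s => LM b (Fs s)).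
  move=> a c; rewrite -(splitK c); case: (split c) => k /=.
    have H : pf (fun s => inner conj (vec_mx (delta_mx 0 a) *m Fs s k) (Fs s k)).
      apply: pf_sum => i; apply: pfM.
        apply: (pf_ext (pf_sum _ _ (fun j => pfM (pfC (vec_mx (delta_mx 0 a) i j)) (pf_lin (X k j 0) (Z k j 0))))).
        by move=> s; rewrite !mxE; apply: eq_bigr => j _; rewrite !mxE.
      apply: (pf_ext (pf_conj (pf_lin (X k i 0) (Z k i 0)))).
      by move=> s; rewrite !mxE.
    by apply: (pf_ext H) => s; rewrite mxE row_mxEl mxE.
  apply: (pf_ext (pfC (LM b Z a (rshift m k)))).
  by move=> s; rewrite !mxE (unsplitK (inr _ k)).
have pfG : pf (fun s => \det (Gram b (Fs s))).
  by apply: pf_det; apply: pfm_mul => //; apply: pfm_H.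
have [q hq] := pfG.
have Fs0 : Fs 0%N = Z.
  by apply: functional_extensionality => k; rewrite /Fs scale0r add0r.
have q0 : q != 0.
  have : Gram b (Fs 0%N) \in unitmx by rewrite Fs0; apply: gram_unit.
  rewrite unitmxE unitfE hq; apply: contraNneq => ->; by rewrite horner0.
have hdist : ev (fun s => frame_dist2 X (fun k => col k (B s *m G s)) < eps ^+ 2).
  have e2 : 0 < eps ^+ 2 by rewrite exprn_gt0.
  have H := small_seq (index_enum 'I_m) predT (fun k =>
    small_seq (index_enum 'I_n) predT (fun i =>
      smallMb (small_norm (hY i k)) (small_bnd (small_norm (hY i k))))).
  apply: (evW (H _ e2)) => s; rewrite /frame_dist2.
  set S := (X in `|X| < _ -> _).
  have -> : \sum_k sqnorm (X k - col k (B s *m G s)) = S.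
    apply: eq_bigr => k _; apply: eq_bigr => i _.
    by rewrite !mxE expr2 distrC.
  rewrite ger0_norm // sumr_ge0 // => k _; rewrite sumr_ge0 // => i _.
  by rewrite mulr_ge0.
have [N HN] := evI (evI evB hdist) (ex_intro _ 1%N (fun s (h : (1 <= s)%N) => h)).
have [s Ns qs] := pf_roots q0 N.
have [[[uB HP] hd] s1] := HN s Ns.
exists (fun k => col k (B s *m G s)); split => //.
  exact: parseval_of.
have s0 : (s%:R : K) != 0 by rewrite pnatr_eq0 -lt0n.
have -> : (fun k => col k (B s *m G s)) =
    (fun k => (B s *m ((s%:R)^-1)%:M) *m Fs s k).
  apply: functional_extensionality => k.
  rewrite col_mulmx -mulmxA mul_scalar_mx /Fs /G linearD /= !col_mat.
  by rewrite linearZ /= col_mat scalerDr scalerA mulVf // scale1r.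
apply: inj_mul.
  by apply: (gram_inj hb); rewrite unitmxE unitfE hq.
by rewrite unitmx_mul uB unitmxE det_scalar unitrX // unitfE invr_eq0.
Qed.

End Main.

End GSsec.

End Gen.


Lemma double0 (K : numFieldType) (a : K) : a + a = 0 -> a = 0.
Proof.
move=> h; have : a *+ 2 == 0 by rewrite mulr2n h.
by rewrite -mulr_natr mulf_eq0 pnatr_eq0 orbF => /eqP.
Qed.

Lemma sum_set2 (K : numFieldType) n (i j : 'I_n) (F : 'I_n -> 'cV[K]_n) : i != j ->
  \sum_(k in [set i; j]) F k = F i + F j.
Proof.
move=> hij; by rewrite big_setU1 ?big_set1 //= inE.
Qed.

Section RealCase.
Variable R : realType.
Local Notation cj := (@idfun R : {rmorphism R -> R}).

Lemma real_kernel n (T : 'M[R]_n) :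
  T^T = T ->
  (forall i, T i i = 0) ->
  (forall i j, i != j -> T i i + T i j + T j i + T j j = 0) -> T = 0.
Proof.
move=> sT h1 h2; apply/matrixP => i j; rewrite mxE.
case: (eqVneq i j) => [->|hij]; first exact: h1.
have := h2 i j hij; rewrite !h1 -{2}sT mxE add0r addr0 => /double0.
done.
Qed.

Lemma Zex_real n m : ((n * (n + 1)) %/ 2 <= m)%N ->
  exists Z : 'I_m -> 'cV[R]_n, forall w, Lv cj 1 Z w = 0 -> w = 0.
Proof.
move=> hm.
pose I := ('I_n + {A : {set 'I_n} | #|A| == 2})%type.
pose v (p : I) : 'cV[R]_n := match p with
  | inl i => delta_mx i 0 | inr A => \sum_(k in val A) delta_mx k 0 end.
apply: (@Zex_of _ cj _ _ _ I v).
  rewrite card_sum card_ord card_sig.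
  have -> : #|[pred A : {set 'I_n} | #|A| == 2]| = 'C(n, 2).
    by rewrite -cardsE card_draws card_ord.
  have -> : (n + 'C(n, 2) = 'C(n.+1, 2))%N by rewrite binS bin1 addnC.
  by rewrite (leq_trans _ hm) // bin2 /= -divn2 mulnC addn1.
move=> T HT hs.
have sT : T^T = T.
  apply: (can_inj (@mxvecK _ n n)); apply/eqP; rewrite eq_sym -subr_eq0.
  by move: hs; rewrite scale1r => ->.
have h1 i : T i i = 0.
  by have := HT (inl i); rewrite innerQ /= quad1.
apply: real_kernel => // i j hij.
have hA : #|[set i; j]| == 2 by rewrite cards2 hij.
have := HT (inr (exist _ [set i; j] hA)); rewrite innerQ /= sum_set2 //.
by rewrite -(scale1r (delta_mx j 0)) quad2 /= !mul1r.
Qed.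

End RealCase.

Section ComplexCase.
Variable R : realType.
Local Notation C := (R[i]).
Local Notation cj := (@conjc R : {rmorphism R[i] -> R[i]}).

Lemma conj_i : cj ('i%C : C) = - 'i%C.
Proof. by apply/eqP; rewrite eq_complex /= oppr0 !eqxx. Qed.

Lemma Zex_cplx n m : (n ^ 2 <= m)%N ->
  exists Z : 'I_m -> 'cV[C]_n, forall w, Lv cj 0 Z w = 0 -> w = 0.
Proof.
move=> hm.
pose I := ('I_n * 'I_n)%type.
pose v (p : I) : 'cV[C]_n :=
  if p.1 == p.2 then delta_mx p.1 0
  else if (p.1 < p.2)%N then delta_mx p.1 0 + 1 *: delta_mx p.2 0
  else delta_mx p.2 0 + 'i%C *: delta_mx p.1 0.
apply: (@Zex_of _ cj _ _ _ I v).
  by rewrite card_prod card_ord mulnn.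
move=> T HT _.
have h1 i : T i i = 0.
  by have := HT (i, i); rewrite innerQ /v /= eqxx quad1.
have h2 (i j : 'I_n) : (i < j)%N -> T i j = 0 /\ T j i = 0.
  move=> hij; have ne : i != j by rewrite neq_ltn hij.
  have := HT (i, j); rewrite innerQ /v /= (negPf ne) hij quad2 !h1.
  rewrite rmorph1 !mul1r add0r addr0 => e1.
  have := HT (j, i); rewrite innerQ /v /= eq_sym (negPf ne) ltnNge (ltnW hij) /=.
  rewrite quad2 !h1 conj_i add0r !mulr0 addr0 => e2.
  have e3 : T i j - T j i = 0.
    have i0 : ('i%C : C) != 0 by rewrite eq_complex /= eqxx oner_eq0.
    have : 'i%C * (T i j - T j i) = 0 by rewrite mulrBr -mulNr.
    by move/eqP; rewrite mulf_eq0 (negPf i0) /= => /eqP.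
  have e4 : T i j = T j i by apply/eqP; rewrite -subr_eq0 e3.
  by split; apply: double0; [rewrite {2}e4 | rewrite -{1}e4].
apply/matrixP => i j; rewrite mxE.
case: (ltngtP i j) => [hij|hji|/val_inj ->]; first by case: (h2 _ _ hij).
  by case: (h2 _ _ hji).
exact: h1.
Qed.

End ComplexCase.

Unset Implicit Arguments.

Theorem mainTheorem7 (R : realType) (n m : nat) :
  (((n * (n + 1)) %/ 2 <= m)%N -> injective_parseval_dense (@id R) n m)
  /\ ((n ^ 2 <= m)%N ->
      injective_parseval_dense (fun z : R[i] => z^*) n m).
Proof.
split => hm.
  have := @dense_gen R (@idfun R : {rmorphism R -> R}) (fun x => erefl)
    _ (fun x => erefl) _ (@Num.sqrt R) (fun x _ => sqrtr_ge0 x)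
    (fun x hx => sqr_sqrtr hx) (fun x _ => erefl) m _ n 1 _ (@Zex_real R _ _ hm).
  apply.
  - by move=> x /=; rewrite real_normK ?num_real // expr2.
  - by exists 1 => a /= h _; apply: double0.
  - move=> x; exists (Num.bound `|x|).
    by apply: archi_boundP.
  - move=> T sT; have e : T^T = T.
      by rewrite -[RHS]sT; apply/matrixP => i j; rewrite !mxE.
    by rewrite e subrr scaler0.
have := @dense_gen R[i] (@conjc R : {rmorphism R[i] -> R[i]}) (@conjcK R)
  _ _ _ (@sqrtc R) (fun x (hx : 0 <= x) => ltac:(by rewrite sqrtc_ge0)) (fun x _ => sqr_sqrtc x) _ m _ n 0
  (fun T _ => scale0r _) (@Zex_cplx R _ _ hm).
apply.
- by move=> x; rewrite sqr_normc.
- by case=> a b; rewrite !normc_def /= sqrrN.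
- exists 'i%C; case => x y h1 h2.
  move: h1 h2 => /eqP; rewrite eq_complex /= => /andP [/eqP h1 _].
  move/eqP; rewrite eq_complex /= => /andP [/eqP h2 _].
  apply/eqP; rewrite eq_complex /=; apply/andP; split; apply/eqP; lra.
- move=> x hx; have := ger0_Im hx; case: x hx => a b /= _ ->.
  by apply/eqP; rewrite eq_complex /= oppr0 !eqxx.
- move=> x; have /complex_realP [k hk] := normr_real x.
  exists (Num.bound `|k|).
  rewrite hk -(rmorph_nat (real_complex R)) ltcR (le_lt_trans (ler_norm k)) //.
  by rewrite archi_boundP // normr_ge0.
Qed.
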